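(* Let $F$ be a perfect field of characteristic $p>0$, let $l,m$ be positive integers with $\gcd(l,m)=1$, let $m=ls+k$ and $s=tp+r$ be divisions with remainder with $1\le k<l$ and $0\le r<p$, and let $w\in F[x]$ be monic of degree $s$. Then $$\bigl(p\nmid l \text{ and } kw+lxw'=0\bigr)\iff \bigl(p\mid m \text{ and there exists a monic } u\in F[x] \text{ with } w=x^ru^p\bigr).$$
   Context: $w'$ denotes the formal derivative of $w$. *)

(* Defs.v *)
From mathcomp Require Import all_boot all_order all_algebra.
Set Implicit Arguments. Unset Strict Implicit. Unset Printing Implicit Defensive.
Import GRing.Theory.
Local Open Scope ring_scope.

Definition perfect_field (F : fieldType) (p : nat) : Prop :=
  forall x : F, exists y : F, y ^+ p = x.

(* Main.v *)
Require Import Defs.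
From mathcomp Require Import all_boot all_order all_algebra.
From mathcomp Require Import zify ring.
Set Implicit Arguments. Unset Strict Implicit. Unset Printing Implicit Defensive.
Import GRing.Theory.
Local Open Scope ring_scope.

Lemma coefXderiv (F : fieldType) (w : {poly F}) i : ('X * w^`())`_i = w`_i *+ i.
Proof. by case: i => [|i]; rewrite coefXM ?mulr0n //= coef_deriv. Qed.

Lemma coef_eqn (F : fieldType) (w : {poly F}) (k l : nat) i :
  k%:R *: w + l%:R *: ('X * w^`()) = 0 -> (k + l * i)%:R * w`_i = 0 :> F.
Proof.
move=> H; have := congr1 (fun q : {poly F} => q`_i) H; rewrite /= coefD !coefZ coefXderiv coef0.
rewrite natrD natrM mulrDl -mulrA [_ * (_ *+ _)]mulrC mulr_natl.
move=> E; rewrite -[RHS]E; congr (_ + _).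
by rewrite mulrC -[w`_i *+ i]mulr_natl.
Qed.

Lemma frob1 (F : fieldType) p (x : F) : p \in [pchar F] -> x ^+ p = 1 -> x = 1.
Proof.
move=> pP xp; apply/eqP; rewrite -subr_eq0.
have: (x - 1) ^+ p = 0.
  by rewrite -(pFrobenius_autE pP) rmorphB /= !pFrobenius_autE xp expr1n subrr.
by move/eqP; rewrite expf_eq0 => /andP[].
Qed.

Theorem lemma4p9 (F : fieldType) (p : nat) (l m s k t r : nat) (w : {poly F}) :
  p \in [pchar F] -> perfect_field F p ->
  (0 < l)%N -> (0 < m)%N -> coprime l m ->
  m = (l * s + k)%N -> (1 <= k)%N -> (k < l)%N ->
  s = (t * p + r)%N -> (r < p)%N ->
  w \is monic -> size w = s.+1 ->
  ((~~ (p %| l)%N /\ k%:R *: w + l%:R *: ('X * w^`()) = 0)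
   <-> ((p %| m)%N /\ exists u : {poly F}, u \is monic /\ w = 'X^r * u ^+ p)).
Proof.
move=> pP perf l0 m0 cop Em k1 kl Es rp wm sw.
have pr := pcharf_prime pP.
have p0 := prime_gt0 pr.
have Pp : p \in [pchar {poly F}] by rewrite pchar_poly.
have lcw : w`_s = 1 by move/monicP: wm; rewrite /lead_coef sw.
split.
- case=> npl H.
  have dv i : w`_i != 0 -> (p %| k + l * i)%N.
    move=> nz; rewrite (dvdn_pcharf pP); have /eqP := coef_eqn i H.
    by rewrite mulf_eq0 (negbTE nz) orbF.
  have pm : (p %| m)%N by rewrite Em addnC dv // lcw oner_neq0.
  split=> //.
  have supp i : w`_i != 0 -> exists2 j, (j < t.+1)%N & i = (j * p + r)%N.
    move=> nz.
    have iS : (i <= s)%N.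
      rewrite leqNgt; apply/negP => si; move: nz; rewrite nth_default ?eqxx //.
      by rewrite sw.
    have : (p %| l * (s - i))%N.
      by rewrite mulnBr -(subnDl k); apply: dvdn_sub; [rewrite addnC -Em | apply: dv].
    rewrite Euclid_dvdM // (negbTE npl) /= => /dvdnP [q Hq].
    have qt : (q <= t)%N.
      rewrite leqNgt; apply/negP => tq.
      have : (t.+1 * p <= q * p)%N by rewrite leq_mul2r tq orbT.
      rewrite mulSn; lia.
    have : (q * p <= t * p)%N by rewrite leq_mul2r qt orbT.
    exists (t - q)%N; first lia.
    rewrite mulnBl; lia.
  have perf' x : exists y : F, y ^+ p == x.
    by have [y hy] := perf x; exists y; apply/eqP.
  pose c := fun j => xchoose (perf' (w`_(j * p + r))).
  have cP j : c j ^+ p = w`_(j * p + r) := eqP (xchooseP (perf' _)).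
  exists (\poly_(j < t.+1) c j).
  split.
    have ct : c t = 1 by apply: (frob1 pP); rewrite cP -Es lcw.
    by rewrite monicE lead_coef_poly //= ct ?oner_neq0.
  have -> : (\poly_(j < t.+1) c j) ^+ p = \sum_(j < t.+1) w`_(j * p + r) *: 'X^(j * p).
    rewrite poly_def; set S := (\sum_(_ < _) _)%R.
    rewrite -(pFrobenius_autE Pp S) /S rmorph_sum; apply: eq_bigr => j _.
        by rewrite /= pFrobenius_autE exprZn -exprM cP.
  apply/polyP => i; rewrite coefXnM coef_sum.
  case: ltnP => ir.
    apply/eqP; apply: contraT => nz; have [j _ ei] := supp i nz; lia.
  have [wi0|nz] := eqVneq w`_i 0.
    rewrite wi0 big1 // => j _; rewrite coefZ coefXn.
    case: eqP => [e|]; last by rewrite mulr0.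
    by rewrite -e subnK // wi0 mul0r.
  have [j jt ei] := supp i nz.
  rewrite (bigD1 (Ordinal jt)) //= big1 ?addr0.
    by rewrite coefZ coefXn ei addnK eqxx mulr1.
  move=> j' nj; rewrite coefZ coefXn ei addnK eqn_pmul2r // .
  have nj' : (nat_of_ord j' != j) by move: nj; rewrite -val_eqE.
  by rewrite eq_sym (negbTE nj') mulr0.
- case=> pm [u [um ->]].
  split.
    apply/negP => pl; have : (p %| gcdn l m)%N by rewrite dvdn_gcd pl pm.
    by rewrite (eqP cop) dvdn1 => /eqP p1; rewrite p1 in pr.
  have dw : 'X * ('X^r * u ^+ p)^`() = ('X^r * u ^+ p) *+ r.
    rewrite derivM (deriv_exp u) (mulrn_pchar Pp) mulr0 addr0 derivXn.
    case: r {Es rp} => [|r']; first by rewrite !mulr0n mul0r mulr0.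
    by rewrite /= mulrnAl mulrnAr mulrA -exprS.
  rewrite dw -scaler_nat scalerA -scalerDl -natrM -natrD.
  have -> : ((k + l * r)%:R : F) = 0.
    apply/eqP; rewrite -(dvdn_pcharf pP).
    have ht : (p %| l * (t * p))%N by rewrite mulnA dvdn_mull.
    by move: pm; rewrite Em Es mulnDr -addnA (dvdn_addr _ ht) addnC.
  by rewrite scale0r.
Qed.
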